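(* Suppose that $K$ is algebraically closed of characteristic $0$ and its residue class field $k$ has characteristic $p>0$. Then for each $m\in\mathbb{N}$ there exist $x_1,\dots,x_m\in K^\vee$ such that $\{\pi(x_1),\dots,\pi(x_m)\}$ is an orthogonal subset of $K^\vee/K$, where $\pi:K^\vee\to K^\vee/K$ is the canonical quotient map.
   Context: $K$ is a complete non-archimedean non-trivially valued field which is not spherically complete; $K^\vee$ is a fixed spherically complete valued field which is an immediate extension of $K$, regarded as a $K$-normed space with its absolute value. $K^\vee/K$ carries the quotient norm $\|\pi(z)\|=\inf_{a\in K}|z-a|$. A subset $S$ not containing $0$ is orthogonal if $\|\sum_i\lambda_is_i\|=\max_i\|\lambda_is_i\|$ for all finitely many distinct $s_i\in S$ and $\lambda_i\in K$. *)

(* Defs.v *)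
From HB Require Import structures.
From mathcomp Require Import all_boot all_order all_algebra.
From mathcomp Require Import boolp classical_sets reals.
Set Implicit Arguments. Unset Strict Implicit. Unset Printing Implicit Defensive.
Import Order.TTheory GRing.Theory Num.Theory.
Local Open Scope ring_scope.
Local Open Scope classical_set_scope.

Definition nonarch_abs (R : realType) (F : fieldType) (v : F -> R) : Prop :=
  [/\ forall x, 0 <= v x,
      forall x, v x = 0 <-> x = 0,
      forall x y, v (x * y) = v x * v y
    & forall x y, v (x + y) <= Num.max (v x) (v y)].

Definition cball (R : realType) (F : fieldType) (v : F -> R) (a : F) (r : R) :
  set F := [set y | v (y - a) <= r].

Definition sph_complete (R : realType) (F : fieldType) (v : F -> R) : Prop :=
  forall (a : nat -> F) (r : nat -> R),
    (forall n, 0 <= r n) ->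
    (forall n, cball v (a n.+1) (r n.+1) `<=` cball v (a n) (r n)) ->
    exists y, forall n, cball v (a n) (r n) y.

Definition cauchy_seq (R : realType) (F : fieldType) (v : F -> R) (u : nat -> F) :=
  forall e : R, 0 < e -> exists N, forall m n, (N <= m)%N -> (N <= n)%N ->
    v (u m - u n) < e.

Definition converges (R : realType) (F : fieldType) (v : F -> R) (u : nat -> F) :=
  exists l, forall e : R, 0 < e -> exists N, forall n, (N <= n)%N -> v (u n - l) < e.

Definition complete_abs (R : realType) (F : fieldType) (v : F -> R) : Prop :=
  forall u, cauchy_seq v u -> converges v u.

Definition nontrivial_abs (R : realType) (F : fieldType) (v : F -> R) : Prop :=
  exists a, v a <> 0 /\ v a <> 1.

(* L (absolute value v) is an immediate extension of K via i:
   same value group and same residue field. *)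
Definition immediate_ext (R : realType) (K L : fieldType)
  (i : {rmorphism K -> L}) (v : L -> R) : Prop :=
  (forall z, z <> 0 -> exists a, v (i a) = v z) /\
  (forall z, v z <= 1 -> exists a, v (i a) <= 1 /\ v (z - i a) < 1).

(* quotient norm on L/K: || pi z || = inf_{a in K} v (z - i a) *)
Definition qnorm (R : realType) (K L : fieldType)
  (i : {rmorphism K -> L}) (v : L -> R) (z : L) : R :=
  inf (range (fun a : K => v (z - i a))).

(* the family pi(x_1),...,pi(x_m) is orthogonal in the K-normed space L/K:
   no pi(x_j) is 0, and for all scalars lambda_j in K,
   || sum_j lambda_j pi(x_j) || = max_j || lambda_j pi(x_j) ||.
   (scalar action: lambda pi(x) = pi(i lambda * x)) *)
Definition quot_orthogonal (R : realType) (K L : fieldType)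
  (i : {rmorphism K -> L}) (v : L -> R) (m : nat) (x : 'I_m -> L) : Prop :=
  (forall j, forall a : K, x j <> i a) /\
  (forall lam : 'I_m -> K,
     qnorm i v (\sum_(j < m) i (lam j) * x j)
     = \big[Num.max/0]_(j < m) qnorm i v (i (lam j) * x j)).

(* Main.v *)
Require Import Defs.
From HB Require Import structures.
From mathcomp Require Import all_boot all_order all_algebra.
From mathcomp Require Import boolp classical_sets reals.
From mathcomp Require Import ring lra.
Import Order.TTheory GRing.Theory Num.Theory.
Local Open Scope ring_scope.
Set Implicit Arguments. Unset Strict Implicit. Unset Printing Implicit Defensive.

Section Abs.
Variables (R : realType) (L : fieldType) (v : L -> R).
Hypothesis hv : nonarch_abs v.

Lemma v_ge0 x : 0 <= v x. Proof. by case: hv. Qed.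
Lemma v_eq0 x : v x = 0 <-> x = 0. Proof. by case: hv. Qed.
Lemma vM x y : v (x * y) = v x * v y. Proof. by case: hv. Qed.
Lemma vD x y : v (x + y) <= Num.max (v x) (v y). Proof. by case: hv. Qed.
Lemma v0 : v 0 = 0. Proof. exact/v_eq0. Qed.
Lemma v_gt0 x : x != 0 -> 0 < v x.
Proof. by move=> /eqP hx; rewrite lt_def v_ge0 andbT; apply/eqP => /v_eq0. Qed.
Lemma v1 : v 1 = 1.
Proof.
have h : v 1 * v 1 = v 1 * 1 by rewrite -vM !mulr1.
by apply: (mulfI _ h); rewrite gt_eqF // v_gt0 ?oner_eq0.
Qed.
Lemma vN1 : v (-1) = 1.
Proof.
have h : v (-1) ^+ 2 = 1 ^+ 2 by rewrite expr2 -vM mulrNN mulr1 v1 expr1n.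
by move/eqP: h; rewrite eqrXn2 ?v_ge0 // => /eqP.
Qed.
Lemma vN x : v (- x) = v x. Proof. by rewrite -mulN1r vM vN1 mul1r. Qed.
Lemma vB x y : v (x - y) = v (y - x). Proof. by rewrite -vN opprB. Qed.
Lemma vX x n : v (x ^+ n) = v x ^+ n.
Proof. elim: n => [|n IH]; by rewrite ?expr0 ?v1 // !exprS vM IH. Qed.
Lemma vV x : v (x^-1) = (v x)^-1.
Proof.
have [->|hx] := eqVneq x 0; first by rewrite invr0 v0 invr0.
have h : v x * v x^-1 = 1 by rewrite -vM mulfV // v1.
by rewrite -[RHS]mulr1 -h mulrA mulVf ?mul1r // lt0r_neq0 // v_gt0.
Qed.
Lemma vDle x y c : v x <= c -> v y <= c -> v (x + y) <= c.
Proof. move=> hx hy; apply: le_trans (vD x y) _; by rewrite ge_max hx hy. Qed.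
Lemma vDlt x y c : v x < c -> v y < c -> v (x + y) < c.
Proof. move=> hx hy; apply: le_lt_trans (vD x y) _; by rewrite gt_max hx hy. Qed.
Lemma vD_eq x y : v y < v x -> v (x + y) = v x.
Proof.
move=> hyx; apply/eqP; rewrite eq_le; apply/andP; split.
  by apply: le_trans (vD x y) _; rewrite ge_max lexx ltW.
have e : x = (x + y) + (- y) by rewrite addrK.
have := vD (x + y) (- y); rewrite -e vN => h.
move: h; rewrite le_max => /orP [//|h]; by move: (lt_le_trans hyx h); rewrite ltxx.
Qed.
Lemma vsum_le (I : Type) (r : seq I) (P : pred I) (F : I -> L) c : 0 <= c ->
  (forall j, P j -> v (F j) <= c) -> v (\sum_(j <- r | P j) F j) <= c.
Proof. move=> c0 h; elim/big_ind: _ => //; [by rewrite v0 | move=> x y; exact: vDle]. Qed.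
Lemma vsum_lt (I : Type) (r : seq I) (P : pred I) (F : I -> L) c : 0 < c ->
  (forall j, P j -> v (F j) < c) -> v (\sum_(j <- r | P j) F j) < c.
Proof. move=> c0 h; elim/big_ind: _ => //; [by rewrite v0 | move=> x y; exact: vDlt]. Qed.
Lemma v_natr n : v n%:R <= 1.
Proof.
elim: n => [|n IH]; first by rewrite v0.
by rewrite -addn1 natrD; apply: vDle => //; rewrite v1.
Qed.
Lemma vprod (I : Type) (r : seq I) (F : I -> L) :
  v (\prod_(j <- r) F j) = \prod_(j <- r) v (F j).
Proof. elim/big_rec2: _ => [|j x y _ <-]; by rewrite ?v1 // vM. Qed.
End Abs.
Section Reals.
Variable R : realType.

Lemma powdiff_le (y t : R) n : 0 <= y -> y <= t -> t <= y + 1 ->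
  t ^+ n - y ^+ n <= (t - y) * (n%:R * (y + 1) ^+ n.-1).
Proof.
move=> y0 yt ty1; rewrite subrXX; apply: ler_wpM2l; first by rewrite subr_ge0.
have -> : n%:R * (y + 1) ^+ n.-1 = \sum_(i < n) (y + 1) ^+ n.-1.
  by rewrite sumr_const card_ord mulr_natl.
apply: ler_sum => i _.
have t0 : 0 <= t by apply: le_trans yt.
have -> : (y + 1) ^+ n.-1 = (y + 1) ^+ (n.-1 - i) * (y + 1) ^+ i.
  rewrite -exprD subnK //; have := ltn_ord i; case: n i => // n i /=; rewrite ltnS.
apply: ler_pM; rewrite ?exprn_ge0 //.
  by apply: lerXn2r; rewrite ?nnegrE //; apply: addr_ge0.
by apply: lerXn2r; rewrite ?nnegrE ?lerDl //; apply: addr_ge0.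
Qed.

Lemma cont_pow (A B y : R) n : 0 <= A -> 0 <= y -> A * y ^+ n < B ->
  exists2 e, 0 < e & forall t, y <= t -> t < y + e -> A * t ^+ n < B.
Proof.
move=> A0 y0 h.
set C := A * (n%:R * (y + 1) ^+ n.-1) + 1.
have C0 : 0 < C by rewrite ltr_pwDr // mulr_ge0 // mulr_ge0 // exprn_ge0 // addr_ge0.
exists (Num.min 1 ((B - A * y ^+ n) / C)).
  by rewrite lt_min ltr01 /= divr_gt0 // subr_gt0.
move=> t yt ht.
have : t - y < Num.min 1 ((B - A * y ^+ n) / C) by rewrite ltrBlDl.
rewrite lt_min => /andP [t1 t2].
have ty1 : t <= y + 1 by rewrite -lerBlDl ltW.
have hd := @powdiff_le y t n y0 yt ty1.
have e : A * t ^+ n = A * y ^+ n + A * (t ^+ n - y ^+ n) by rewrite mulrBr addrC subrK.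
rewrite e -ltrBrDl.
have ty0 : 0 <= t - y by rewrite subr_ge0.
apply: le_lt_trans (_ : (t - y) * C < _).
  apply: le_trans (ler_wpM2l A0 hd) _.
  rewrite /C mulrDr mulr1 mulrCA lerDl //.
by rewrite -ltr_pdivlMr.
Qed.

Lemma ratio_lt (A B r t : R) (a b : nat) : 0 <= A -> 0 < B -> 0 < r -> r < t ->
  (a < b)%N -> A * r ^+ a <= B * r ^+ b -> A * t ^+ a < B * t ^+ b.
Proof.
move=> A0 B0 r0 rt ab h.
have t0 : 0 < t by apply: lt_trans rt.
have eb : b = ((b - a) + a)%N by rewrite subnK // ltnW.
rewrite eb !exprD mulrA in h *.
have ra : 0 < r ^+ a by rewrite exprn_gt0.
rewrite ler_pM2r // in h.
rewrite mulrA ltr_pM2r ?exprn_gt0 //.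
apply: le_lt_trans h _; rewrite ltr_pM2l // ltrXn2r ?ltW //.
by rewrite subn_eq0 -ltnNge.
Qed.

Lemma thresh_list (T : eqType) (P : T -> R -> Prop) (r : R) (s : seq T) :
  (forall j, j \in s -> exists2 u, r < u & forall t, r < t -> t < u -> P j t) ->
  exists2 u, r < u & forall j t, j \in s -> r < t -> t < u -> P j t.
Proof.
elim: s => [|x s IH] h.
  by exists (r + 1); [rewrite ltrDl | move=> j t; rewrite in_nil].
have [u1 ru1 h1] := h x (mem_head _ _).
have [u2 ru2 h2] : exists2 u, r < u & forall j t, j \in s -> r < t -> t < u -> P j t.
  by apply: IH => j js; apply: h; rewrite in_cons js orbT.
exists (Num.min u1 u2); first by rewrite lt_min ru1 ru2.
move=> j t; rewrite in_cons lt_min => /orP [/eqP -> | js] rt /andP [t1 t2].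
  exact: h1.
exact: h2.
Qed.

Lemma thresh_ord (m : nat) (P : 'I_m -> R -> Prop) (r : R) :
  (forall j, exists2 u, r < u & forall t, r < t -> t < u -> P j t) ->
  exists2 u, r < u & forall j t, r < t -> t < u -> P j t.
Proof.
move=> h; have [u ru hu] := @thresh_list _ P r (enum 'I_m) (fun j _ => h j).
by exists u => // j t; apply: hu; rewrite mem_enum.
Qed.

Lemma largest_max (m : nat) (w : 'I_m -> R) (j0 : 'I_m) :
  exists J, (forall j, w j <= w J) /\ (forall j : 'I_m, (J < j)%N -> w j < w J).
Proof.
case: (@arg_maxP _ _ 'I_m j0 xpredT w isT) => J0 _ hJ0.
case: (@arg_maxnP 'I_m J0 (fun i => w i == w J0) (fun i => nat_of_ord i) (eqxx _)).
move=> J /eqP hJ hmax; exists J; split.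
  by move=> j; rewrite hJ; apply: hJ0.
move=> j hj; have hle : w j <= w J0 := hJ0 j isT.
rewrite hJ lt_neqAle hle andbT; apply/negP => /eqP e.
have := hmax j (introT eqP e); rewrite /= leqNgt hj; done.
Qed.
End Reals.
Lemma dvd_bin_ppow p k i : prime p -> (0 < i < p ^ k)%N -> (p %| 'C(p ^ k, i))%N.
Proof.
move=> pp /andP [i0 ik].
case: i i0 ik => // i _ ik.
have e := mul_bin_diag (p ^ k) i.
apply/negPn/negP => nd.
have cop : coprime (p ^ k) 'C(p ^ k, i.+1) by rewrite coprimeXl // prime_coprime.
have : (p ^ k %| i.+1 * 'C(p ^ k, i.+1))%N by rewrite -e dvdn_mulr.
rewrite Gauss_dvdl // => /dvdn_leq => h.
by move: (h isT); rewrite leqNgt ik.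
Qed.

Section Quot.
Variables (R : realType) (K L : fieldType) (i : {rmorphism K -> L}) (v : L -> R).
Hypothesis hv : nonarch_abs v.
Local Notation qn := (qnorm i v).

Lemma rng_ne0 x : (range (fun a : K => v (x - i a)) !=set0)%classic.
Proof. by exists (v (x - i 0)), 0. Qed.
Lemma rng_lb x : has_lbound (range (fun a : K => v (x - i a))).
Proof. by exists 0 => _ [a _ <-]; apply: v_ge0. Qed.

Lemma qn_le x a : qn x <= v (x - i a).
Proof. by apply: (ge_inf (rng_lb x)); exists a. Qed.
Lemma qn_lb x B : (forall a, B <= v (x - i a)) -> B <= qn x.
Proof. move=> h; apply: lb_le_inf (rng_ne0 x) _ => _ [a _ <-]; exact: h. Qed.
Lemma qn_ge0 x : 0 <= qn x.
Proof. by apply: qn_lb => a; apply: v_ge0. Qed.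
Lemma qn_approx x e : 0 < e -> exists a, v (x - i a) < qn x + e.
Proof.
move=> e0; have : qn x < qn x + e by rewrite ltrDl.
by case/(inf_lt (rng_ne0 x)) => _ [a _ <-] h; exists a.
Qed.
Lemma qn0 : qn 0 = 0.
Proof.
apply/eqP; rewrite eq_le qn_ge0 andbT.
by apply: le_trans (qn_le 0 0) _; rewrite rmorph0 subr0 (v0 hv).
Qed.
Lemma qnD x y : qn (x + y) <= Num.max (qn x) (qn y).
Proof.
rewrite leNgt; apply/negP => h.
set e := qn (x + y) - Num.max (qn x) (qn y).
have e0 : 0 < e by rewrite subr_gt0.
have [a ha] := qn_approx x e0; have [b hb] := qn_approx y e0.
have := qn_le (x + y) (a + b).
have -> : x + y - i (a + b) = (x - i a) + (y - i b) by rewrite rmorphD; ring.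
move=> h2; have : v ((x - i a) + (y - i b)) < qn (x + y).
  have m1 : qn x <= Num.max (qn x) (qn y) by rewrite le_max lexx.
  have m2 : qn y <= Num.max (qn x) (qn y) by rewrite le_max lexx orbT.
  apply: vDlt => //; [apply: lt_le_trans ha _ | apply: lt_le_trans hb _]; rewrite /e; lra.
by rewrite ltNge h2.
Qed.
Lemma qn_sum (m : nat) (F : 'I_m -> L) :
  qn (\sum_(j < m) F j) <= \big[Num.max/0]_(j < m) qn (F j).
Proof.
elim/big_rec2: _ => [|j x y _ h]; first by rewrite qn0.
apply: le_trans (qnD _ _) _.
by rewrite ge_max le_max lexx /= le_max h orbT.
Qed.

Hypothesis himm : immediate_ext i v.

Lemma not_attained x : (forall b, x <> i b) -> forall b, qn x < v (x - i b).
Proof.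
move=> hx b; rewrite lt_def qn_le andbT; apply/eqP => e.
have xb : x - i b != 0 by rewrite subr_eq0; apply/eqP/hx.
have xb' : x - i b <> 0 by apply/eqP.
have [c hc] := himm.1 _ xb'.
have c0 : i c != 0.
  by apply/eqP => c0; move: hc; rewrite c0 (v0 hv) => /esym/(v_eq0 hv) /eqP; rewrite (negPf xb).
set w := (x - i b) / i c.
have vw : v w <= 1 by rewrite /w (vM hv) (vV hv) hc mulfV // lt0r_neq0 // v_gt0.
have [d [_ hd]] := himm.2 _ vw.
have := qn_le x (b + c * d).
have -> : x - i (b + c * d) = i c * (w - i d).
  by rewrite /w rmorphD rmorphM mulrBr mulrCA mulfV // mulr1; ring.
rewrite (vM hv) hc -e => h.
have vpos : 0 < v (x - i b) by apply: v_gt0.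
by move: h; rewrite -[X in X <= _]mulr1 ler_pM2l // leNgt hd.
Qed.
End Quot.

Section Binom.
Variables (R : realType) (L : fieldType) (v : L -> R).
Hypothesis hv : nonarch_abs v.

Lemma binom_rem (p k : nat) (x y : L) : prime p -> v x <= 1 -> v y <= 1 ->
  v ((x + y) ^+ (p ^ k) - x ^+ (p ^ k) - y ^+ (p ^ k)) <= v p%:R * v y.
Proof.
move=> pp vx vy.
have : (0 < p ^ k)%N by rewrite expn_gt0 prime_gt0.
case e : (p ^ k)%N => [//|n] _.
rewrite exprDn big_ord_recl big_ord_recr /= subn0 bin0 expr0 mulr1 subnn expr0 mul1r binn.
have -> : x ^+ n.+1 *+ 1 + (\sum_(i < n) (x ^+ (n.+1 - bump 0 (widen_ord (leqnSn n) i)) * y ^+ bump 0 (widen_ord (leqnSn n) i)) *+ 'C(n.+1, bump 0 (widen_ord (leqnSn n) i)) + y ^+ bump 0 (@ord_max n) *+ 1) - x ^+ n.+1 - y ^+ n.+1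
  = \sum_(i < n) (x ^+ (n.+1 - bump 0 (widen_ord (leqnSn n) i)) * y ^+ bump 0 (widen_ord (leqnSn n) i)) *+ 'C(n.+1, bump 0 (widen_ord (leqnSn n) i)).
  by rewrite /bump /= add1n; ring.
apply: vsum_le => //; first by rewrite mulr_ge0 ?v_ge0.
move=> j _; rewrite /bump /= add1n.
have hd : (p %| 'C(n.+1, j.+1))%N.
  by rewrite -e; apply: dvd_bin_ppow => //; rewrite e ltnS; apply: ltn_ord.
case/dvdnP: hd => q ->.
rewrite -mulr_natr natrM (vM hv) (vM hv) (vM hv) mulrC mulrA.
rewrite !(vX hv).
have a := v_natr hv q.
have b : v x ^+ (n.+1 - j.+1) <= 1 by apply: exprn_ile1 => //; apply: v_ge0.
have c : v y ^+ j.+1 <= v y by rewrite exprS ler_piMr ?v_ge0 // exprn_ile1 ?v_ge0.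
have q0 := v_ge0 hv q%:R; have p0 := v_ge0 hv p%:R; have y0 := v_ge0 hv y.
have x0 : 0 <= v x ^+ (n.+1 - j.+1) by rewrite exprn_ge0 ?v_ge0.
have y1 : 0 <= v y ^+ j.+1 by rewrite exprn_ge0 ?v_ge0.
have -> : v q%:R * v p%:R * v x ^+ (n.+1 - j.+1) * v y ^+ j.+1
  = v p%:R * (v q%:R * v x ^+ (n.+1 - j.+1) * v y ^+ j.+1) by ring.
rewrite ler_wpM2l //.
apply: le_trans (_ : 1 * 1 * v y <= _); last by rewrite !mul1r.
apply: ler_pM => //; first by rewrite mulr_ge0.
by apply: ler_pM.
Qed.
End Binom.

Section Core.
Variables (R : realType) (K : closedFieldType) (L : fieldType).
Variables (i : {rmorphism K -> L}) (v : L -> R) (p m : nat) (z : L).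
Hypothesis hv : nonarch_abs v.
Hypothesis himm : immediate_ext i v.
Hypothesis pp : prime p.
Hypothesis hz : forall b, z <> i b.
Hypothesis vz : v z = 1.
Local Notation qn := (qnorm i v).
Local Notation r := (qn z).
Hypothesis hr0 : 0 < r.
Hypothesis hPr : v (p%:R : L) <= r ^+ (p ^ m).

Lemma r_lt1 : r < 1.
Proof. by have := not_attained hv himm hz 0; rewrite rmorph0 subr0 vz. Qed.

Lemma via_le1 (a : K) : v (z - i a) < 1 -> v (i a) <= 1.
Proof.
move=> h; have -> : i a = z - (z - i a) by rewrite opprB addrC subrK.
by apply: vDle => //; rewrite ?vz // (vN hv) ltW.
Qed.

Lemma pow_est (a : K) (k : nat) : r < v (z - i a) -> v (z - i a) < 1 -> (k <= m)%N ->
  v (z ^+ (p ^ k) - i a ^+ (p ^ k) - (z - i a) ^+ (p ^ k)) < v (z - i a) ^+ (p ^ k).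
Proof.
move=> rt t1 km.
set t := v (z - i a).
have := binom_rem hv k pp (via_le1 t1) (ltW t1).
have -> : i a + (z - i a) = z by rewrite addrC subrK.
move=> h; apply: le_lt_trans h _.
have P0 := v_ge0 hv (p%:R : L).
have t0 : 0 <= t by apply: v_ge0.
apply: le_lt_trans (_ : v p%:R * t <= v p%:R) _; first by rewrite ler_piMr // ltW.
apply: le_lt_trans hPr _.
apply: lt_le_trans (_ : t ^+ (p ^ m) <= _).
  by rewrite ltrXn2r ?expn_eq0 ?ltW //; case: p pp.
apply: ler_wiXn2l => //; first exact: ltW.
by rewrite leq_exp2l // prime_gt1.
Qed.

Lemma v_powdiff (a : K) (k : nat) : r < v (z - i a) -> v (z - i a) < 1 -> (k <= m)%N ->
  v (z ^+ (p ^ k) - i a ^+ (p ^ k)) = v (z - i a) ^+ (p ^ k).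
Proof.
move=> rt t1 km; have h := pow_est rt t1 km.
have -> : z ^+ (p ^ k) - i a ^+ (p ^ k) = (z - i a) ^+ (p ^ k) +
   (z ^+ (p ^ k) - i a ^+ (p ^ k) - (z - i a) ^+ (p ^ k)) by ring.
have h2 : v (z ^+ (p ^ k) - i a ^+ (p ^ k) - (z - i a) ^+ (p ^ k)) < v ((z - i a) ^+ (p ^ k)) by rewrite (vX hv).
by rewrite (vD_eq hv h2) (vX hv).
Qed.

Lemma eval_F (lam : 'I_m -> K) (c : K) (y : L) :
  (map_poly i (\sum_(j < m) lam j *: 'X^(p ^ j) - c%:P)).[y]
  = \sum_(j < m) i (lam j) * y ^+ (p ^ j) - i c.
Proof.
rewrite rmorphB /= map_polyC hornerD hornerN hornerC raddf_sum horner_sum /=.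
congr (_ - _); apply: eq_bigr => j _.
by rewrite map_polyZ map_polyXn hornerZ hornerXn.
Qed.

Lemma poly_thresh (lam : 'I_m -> K) (c : K) :
  exists2 u, r < u & forall a : K, r < v (z - i a) -> v (z - i a) < u ->
    v (\sum_(j < m) i (lam j) * z ^+ (p ^ j) - i c)
    = v (\sum_(j < m) i (lam j) * i a ^+ (p ^ j) - i c).
Proof.
set F := \sum_(j < m) lam j *: 'X^(p ^ j) - c%:P.
have [rs hF] := closed_field_poly_normal F.
have ev : forall y, (map_poly i F).[y] = i (lead_coef F) * \prod_(b <- rs) (y - i b).
  move=> y; rewrite [in LHS]hF map_polyZ hornerZ rmorph_prod horner_prod /=.
  by congr (_ * _); apply: eq_bigr => b _; rewrite map_polyXsubC hornerXsubC.
have [u ru hu] := @thresh_list R K (fun b t => t < v (z - i b)) r rs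
  (fun b _ => ex_intro2 _ _ (v (z - i b)) (not_attained hv himm hz b) (fun t _ h => h)).
exists u => // a rt tu.
rewrite -!eval_F !ev !(vM hv) !(vprod hv); congr (_ * _).
apply: eq_big_seq => b bs.
have hb := hu b _ bs rt tu.
have -> : i a - i b = (z - i b) + - (z - i a) by ring.
by rewrite vD_eq // (vN hv).
Qed.

Lemma exists_near (u : R) : r < u -> exists a : K, r < v (z - i a) /\ v (z - i a) < u.
Proof.
move=> ru; have ru' : 0 < u - r by rewrite subr_gt0.
have [a ha] := qn_approx i v z ru'.
exists a; split; first exact: (not_attained hv himm hz).
by move: ha; have -> : r + (u - r) = u by rewrite addrC subrK.
Qed.

Lemma core (lam : 'I_m -> K) (c : K) : exists a : K,
  [/\ r < v (z - i a), v (z - i a) < 1 &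
    forall j : 'I_m, v (i (lam j)) * v (z - i a) ^+ (p ^ j)
      <= v (\sum_(j < m) i (lam j) * z ^+ (p ^ j) - i c)].
Proof.
have [u2 ru2 hu2] := poly_thresh lam c.
have r1 := r_lt1.
case: (pselect (exists j0, lam j0 != 0)) => [[j0 hj0] | hall]; last first.
  have [a [rt t1]] := exists_near r1.
  exists a; split => // j.
  have -> : lam j = 0.
    by case: (eqVneq (lam j) 0) => // h; exfalso; apply: hall; exists j.
  by rewrite rmorph0 (v0 hv) mul0r v_ge0.
set w := fun j => v (i (lam j)) * r ^+ (p ^ j).
have [J [hJ1 hJ2]] := largest_max w j0.
have p1 : (1 < p)%N by apply: prime_gt1.
have wj0 : 0 < w j0 by rewrite /w mulr_gt0 ?exprn_gt0 // v_gt0 // fmorph_eq0.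
have wJ0 : 0 < w J by apply: lt_le_trans wj0 (hJ1 j0).
have lJ : 0 < v (i (lam J)).
  rewrite lt_def (v_ge0 hv) andbT; apply/eqP => e; move: wJ0; rewrite /w e mul0r ltxx //.
have [u1 ru1 hu1] : exists2 u, r < u & forall (j : 'I_m) t, r < t -> t < u ->
    (J < j)%N -> v (i (lam j)) * t ^+ (p ^ j) < w J.
  apply: (@thresh_ord R m (fun j t => (J < j)%N -> v (i (lam j)) * t ^+ (p ^ j) < w J) r) => j.
  case: (ltnP J j) => hj.
    have [e e0 he] := @cont_pow R (v (i (lam j))) (w J) r (p ^ j) (v_ge0 hv _) (ltW hr0) (hJ2 j hj).
    exists (r + e); first by rewrite ltrDl.
    by move=> t rt te _; apply: he => //; apply: ltW.
  by exists (r + 1); [rewrite ltrDl | move=> t _ _].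
have ru : r < Num.min u1 (Num.min u2 1) by rewrite !lt_min ru1 ru2 r1.
have [a [rt tu]] := exists_near ru.
move: tu; rewrite !lt_min => /andP [tu1 /andP [tu2 t1]].
exists a; split => //.
set t := v (z - i a).
have t0 : 0 < t by apply: lt_trans rt.
have jm : forall j : 'I_m, (j <= m)%N by move=> j; apply: ltnW.
set M := v (i (lam J)) * t ^+ (p ^ J).
have M0 : 0 < M by rewrite mulr_gt0 // exprn_gt0.
have strict : forall j : 'I_m, j != J -> v (i (lam j)) * t ^+ (p ^ j) < M.
  move=> j jJ; case: (ltngtP j J) => hj.
  - apply: (ratio_lt (v_ge0 hv _) lJ hr0 rt); first by rewrite ltn_exp2l.
    exact: hJ1.
  - apply: lt_le_trans (hu1 j t rt tu1 hj) _.
    rewrite /w /M ler_wpM2l ?v_ge0 //; apply: lerXn2r; rewrite ?nnegrE ?ltW //.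
  - by move: jJ; rewrite (val_inj hj) eqxx.
have weak : forall j : 'I_m, v (i (lam j)) * t ^+ (p ^ j) <= M.
  move=> j; case: (eqVneq j J) => [-> // | jJ]; exact: ltW (strict j jJ).
set X := \sum_(j1 < m) i (lam j1) * z ^+ (p ^ j1) - i c.
set Y := \sum_(j1 < m) i (lam j1) * i a ^+ (p ^ j1) - i c.
have eXY : v X = v Y by apply: hu2.
set E := fun j : 'I_m => z ^+ (p ^ j) - i a ^+ (p ^ j).
set D := z ^+ (p ^ J) - i a ^+ (p ^ J) - (z - i a) ^+ (p ^ J).
have eS : X - Y = i (lam J) * (z - i a) ^+ (p ^ J) +
    (i (lam J) * D + \sum_(j < m | j != J) i (lam j) * E j).
  have -> : X - Y = \sum_(j < m) i (lam j) * E j.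
    rewrite (_ : \sum_(j < m) i (lam j) * E j = \sum_(j < m) (i (lam j) * z ^+ (p ^ j) - i (lam j) * i a ^+ (p ^ j))).
      by rewrite sumrB /X /Y; ring.
    by apply: eq_bigr => j _; rewrite /E mulrBr.
  by rewrite (bigD1 J) //= /E /D; ring.
have vS : v (X - Y) = M.
  rewrite eS vD_eq // (vM hv) (vX hv) //.
  apply: vDlt => //.
    rewrite (vM hv) /M ltr_pM2l //; exact: pow_est.
  apply: vsum_lt => // j jJ.
  rewrite (vM hv) /E v_powdiff //; exact: strict.
have MX : M <= v X.
  rewrite leNgt; apply/negP => hX.
  have : v (X - Y) < M.
    apply: vDlt => //; by rewrite (vN hv) -eXY.
  by rewrite vS ltxx.
by move=> j; apply: le_trans (weak j) MX.
Qed.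

Lemma ortho : quot_orthogonal i v (fun j : 'I_m => z ^+ (p ^ j)).
Proof.
split.
  move=> j b e.
  have [a [rt t1 h]] := core (fun k => (k == j)%:R) b.
  have es : \sum_(k < m) i ((k == j)%:R) * z ^+ (p ^ k) = z ^+ (p ^ j).
    rewrite (bigD1 j) //= eqxx rmorph1 mul1r big1 ?addr0 // => k /negPf ->.
    by rewrite rmorph0 mul0r.
  have := h j; rewrite es e subrr (v0 hv) eqxx rmorph1 v1 // mul1r.
  by rewrite leNgt exprn_gt0 // (lt_trans hr0 rt).
move=> lam; apply/eqP; rewrite eq_le qn_sum //=.
apply: bigmax_le => [|j _]; first exact: qn_ge0.
apply: qn_lb => c.
have [a [rt t1 h]] := core lam c.
apply: le_trans (h j).
apply: le_trans (qn_le i hv _ (lam j * a ^+ (p ^ j))) _.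
rewrite rmorphM rmorphXn -mulrBr (vM hv) v_powdiff //.
by apply: ltnW.
Qed.
End Core.
Section Setup.
Variables (R : realType) (K L : fieldType) (i : {rmorphism K -> L}) (v : L -> R).
Hypothesis hv : nonarch_abs v.
Hypothesis himm : immediate_ext i v.
Local Notation qn := (qnorm i v).

Lemma nest_L (a : nat -> K) (r : nat -> R) :
  (forall n, 0 <= r n) ->
  (forall n, cball (fun a => v (i a)) (a n.+1) (r n.+1) `<=` cball (fun a => v (i a)) (a n) (r n))%classic ->
  forall n, (cball v (i (a n.+1)) (r n.+1) `<=` cball v (i (a n)) (r n))%classic.
Proof.
move=> hr hn n y; rewrite /cball /= => hy.
have h1 : v (i (a n.+1) - i (a n)) <= r n.
  rewrite -rmorphB; apply: (hn n); rewrite /cball /= subrr rmorph0 (v0 hv); exact: hr.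
case: (leP (v (y - i (a n.+1))) (r n)) => hle.
  have -> : y - i (a n) = (y - i (a n.+1)) + (i (a n.+1) - i (a n)) by ring.
  exact: vDle.
have yne : y - i (a n.+1) <> 0.
  move=> e; move: hle; rewrite e (v0 hv) ltNge (hr n) //.
have [c hc] := himm.1 _ yne.
have := hn n (a n.+1 + c); rewrite /cball /=.
have -> : a n.+1 + c - a n.+1 = c by ring.
rewrite hc => /(_ hy).
have -> : i (a n.+1 + c - a n) = i c + (i (a n.+1) - i (a n)) by rewrite !rmorphB rmorphD; ring.
have hlt : v (i (a n.+1) - i (a n)) < v (i c) by rewrite hc; apply: le_lt_trans h1 hle.
by rewrite (vD_eq hv hlt) hc leNgt hle.
Qed.

Hypothesis hnotsph : ~ sph_complete (fun a : K => v (i a)).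
Hypothesis hLsph : sph_complete v.

Lemma exists_out : exists z0, forall b, z0 <> i b.
Proof.
case: (pselect (exists z0, forall b, z0 <> i b)) => // H; exfalso.
apply: hnotsph => a r hr hn.
have [y hy] := hLsph (a := fun n => i (a n)) hr (nest_L hr hn).
case: (pselect (exists b, y = i b)) => [[b e] | nb]; last first.
  by exfalso; apply: H; exists y => b e; apply: nb; exists b.
exists b => n; have := hy n; rewrite /cball /= e -rmorphB //.
Qed.

Hypothesis hcomplete : complete_abs (fun a : K => v (i a)).

Lemma small_inv (e : R) : 0 < e -> exists N : nat, forall n, (N <= n)%N -> n.+1%:R^-1 < e.
Proof.
move=> e0; exists (Num.Def.archi_bound e^-1) => n hn.
have ei : 0 < e^-1 by rewrite invr_gt0.
have h := archi_boundP (ltW ei).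
rewrite -(invrK e) ltf_pV2 ?posrE ?invr_gt0 ?ltr0Sn //.
apply: lt_le_trans h _; rewrite ler_nat; exact: leqW.
Qed.

Lemma qn_pos (z0 : L) : (forall b, z0 <> i b) -> 0 < qn z0.
Proof.
move=> hz; rewrite lt_def qn_ge0 // andbT; apply/eqP => q0.
have hb : forall n : nat, exists b : K, v (z0 - i b) < n.+1%:R^-1.
  move=> n; have ni : 0 < n.+1%:R^-1 :> R by rewrite invr_gt0 ltr0Sn.
  have [b hb] := qn_approx i v z0 ni.
  by exists b; rewrite q0 add0r in hb.
have [bs hbs] := choice hb.
have cs : cauchy_seq (fun a : K => v (i a)) bs.
  move=> e e0; have [N hN] := small_inv e0; exists N => k n hk hn.
  have -> : i (bs k - bs n) = (- (z0 - i (bs k))) + (z0 - i (bs n)) by rewrite rmorphB; ring.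
  apply: (vDlt hv); first rewrite (vN hv).
    exact: (lt_trans (hbs k) (hN k hk)).
  exact: (lt_trans (hbs n) (hN n hn)).
have [l hl] := hcomplete cs.
apply: (hz l); apply/eqP; rewrite -subr_eq0; apply/eqP/(v_eq0 hv).
apply/eqP; rewrite eq_le v_ge0 // andbT; rewrite leNgt; apply/negP => e0.
have [N1 hN1] := hl _ e0; have [N2 hN2] := small_inv e0.
set n := maxn N1 N2.
have : v (z0 - i l) < v (z0 - i l).
  have e1 : z0 - i l = (z0 - i (bs n)) + i (bs n - l) by rewrite rmorphB; ring.
  rewrite {1}e1.
  apply: (vDlt hv); first by apply: (lt_trans (hbs n)); apply: hN2; rewrite leq_maxr.
  by apply: hN1; rewrite leq_maxl.
by rewrite ltxx.
Qed.

Lemma normalize (P : R) (N : nat) (z0 : L) : (forall b, z0 <> i b) -> 0 <= P -> P < 1 ->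
  exists z, [/\ forall b, z <> i b, v z = 1, 0 < qn z & P <= qn z ^+ N].
Proof.
move=> hz P0 P1.
have r0 := qn_pos hz; set r := qn z0 in r0.
have hPr : P * r ^+ N < r ^+ N by rewrite gtr_pMl // exprn_gt0.
have [e e0 he] := cont_pow P0 (ltW r0) hPr.
have [a ha] := qn_approx i v z0 e0.
have rs := not_attained hv himm hz a.
set s := v (z0 - i a) in ha rs.
have s0 : 0 < s by apply: lt_trans rs.
have zne : z0 - i a <> 0 by move=> e1; move: s0; rewrite /s e1 (v0 hv) ltxx.
have [c hc] := himm.1 _ zne.
have c0 : i c != 0.
  apply/eqP => c0; have := hc; rewrite c0 (v0 hv) => h0.
  by move: s0; rewrite /s -h0 ltxx.
have cK : c != 0 by apply: contraNneq c0 => ->; rewrite rmorph0.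
have lb : r / s <= qn ((z0 - i a) / i c).
  apply: qn_lb => b.
  have -> : (z0 - i a) / i c - i b = (z0 - i (a + c * b)) / i c.
    by rewrite rmorphD rmorphM mulrBl mulrDl; field.
  rewrite (vM hv) (vV hv) hc ler_pM2r ?invr_gt0 //; exact: qn_le.
have rs0 : 0 < r / s by rewrite divr_gt0.
exists ((z0 - i a) / i c); split.
- move=> b e1; apply: (hz (a + c * b)).
  by rewrite rmorphD rmorphM -e1 mulrCA mulfV // mulr1; ring.
- by rewrite (vM hv) (vV hv) hc mulfV // lt0r_neq0.
- exact: lt_le_trans lb.
have h1 := he s (ltW rs) ha.
apply: le_trans (_ : (r / s) ^+ N <= _); last first.
  apply: lerXn2r => //; rewrite nnegrE; [exact: ltW | exact: le_trans (ltW rs0) lb].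
rewrite expr_div_n ler_pdivlMr ?exprn_gt0 //; exact: ltW.
Qed.
End Setup.

Unset Implicit Arguments.

Theorem mainTheorem4 (R : realType) (K : closedFieldType) (L : fieldType)
  (i : {rmorphism K -> L}) (v : L -> R) (p : nat)
  (hv : nonarch_abs v)
  (hnontriv : nontrivial_abs (fun a : K => v (i a)))
  (hcomplete : complete_abs (fun a : K => v (i a)))
  (hnotsph : ~ sph_complete (fun a : K => v (i a)))
  (hLsph : sph_complete v)
  (himm : immediate_ext i v)
  (hchar0 : [pchar K] =i pred0)
  (hp : prime p) (hres : v (i p%:R) < 1) :
  forall m : nat, exists x : 'I_m -> L, quot_orthogonal i v x.
Proof.
move=> m.
have [z0 hz0] := exists_out hv himm hnotsph hLsph.
have P1 : v (p%:R : L) < 1 by rewrite -(rmorph_nat i).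
have [z [hz vz r0 hPr]] := normalize hv himm hcomplete (p ^ m) hz0 (v_ge0 hv _) P1.
by exists (fun j => z ^+ (p ^ j)); apply: ortho hv himm hp hz vz r0 hPr.
Qed.
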